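(* Let $a^\circ_{n,k}(1324)$ be the number of cyclic permutations $\pi\in\mathfrak S_n$ whose one-line notation avoids $\delta_k=k(k-1)\cdots21$ and such that every cyclic rotation of the cycle form $C(\pi)$ avoids $1324$. Then for $n\ge3$, $a^\circ_{n,3}(1324)=2^{n-2}$, and for $k\ge4$, $a^\circ_{n,k}(1324)=F_{2n-3}$, where $F_m$ is the $m$th Fibonacci number ($F_1=F_2=1$, $F_{m}=F_{m-1}+F_{m-2}$).
   Context: A permutation $\pi\in\mathfrak S_n$ is cyclic if it consists of a single $n$-cycle. For cyclic $\pi$, $C(\pi)=(1,c_2,\dots,c_n)$ with $c_2=\pi(1)$, $c_{i+1}=\pi(c_i)$; its cyclic rotations are the sequences $c_ic_{i+1}\cdots c_nc_1\cdots c_{i-1}$ (with $c_1=1$). A sequence avoids a pattern $\sigma\in\mathfrak S_m$ if no subsequence of length $m$ is in the same relative order as $\sigma$. The one-line notation of $\pi$ is $\pi_1\cdots\pi_n$, $\pi_i=\pi(i)$. *)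

(* Defs.v *)
From mathcomp Require Import all_boot all_fingroup.
Set Implicit Arguments. Unset Strict Implicit. Unset Printing Implicit Defensive.

(* Permutations of 'I_n = {0,...,n-1}; values shifted by -1 w.r.t. the paper,
   which does not affect relative order (pattern avoidance). *)

Definition same_order (t sigma : seq nat) : bool :=
  (size t == size sigma) &&
  [forall i : 'I_(size t), forall j : 'I_(size t),
     (nth 0 t i < nth 0 t j) == (nth 0 sigma i < nth 0 sigma j)].

Definition avoids (s sigma : seq nat) : bool :=
  [forall m : (size s).-tuple bool, ~~ same_order (mask m s) sigma].

Definition oneline n (p : {perm 'I_n}) : seq nat := [seq val (p i) | i <- enum 'I_n].

Definition pfun n (p : {perm 'I_n}) (i : nat) : nat :=
  if insub i is Some j then val (p j) else i.

Definition cycle_form n (p : {perm 'I_n}) : seq nat := traject (pfun p) 0 n.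

Definition cyclic_perm n (p : {perm 'I_n}) : bool :=
  [exists x : 'I_n, #|porbit p x| == n].

Definition delta k : seq nat := rev (iota 0 k).
Definition p1324 : seq nat := [:: 0; 2; 1; 3].

Definition a_circ (n k : nat) : nat :=
  #|[set p : {perm 'I_n} | [&& cyclic_perm p, avoids (oneline p) (delta k) &
        [forall i : 'I_n, avoids (rot i (cycle_form p)) p1324]]]|.

Fixpoint fib (m : nat) : nat :=
  match m with 0 => 0 | 1 => 1 | (S ((S m'') as m')) => fib m' + fib m'' end.

(* Main.v *)
Require Import Defs.
From mathcomp Require Import all_boot all_fingroup.
From mathcomp Require Import zify.
Set Implicit Arguments. Unset Strict Implicit. Unset Printing Implicit Defensive.

Lemma subseq_catE (T : eqType) (t s1 s2 : seq T) :
  subseq t (s1 ++ s2) -> exists t1 t2, t = t1 ++ t2 /\ subseq t1 s1 /\ subseq t2 s2.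
Proof.
case/subseqP=> m sm ->.
have h1 : size (take (size s1) m) = size s1.
  by rewrite size_takel // sm size_cat leq_addr.
exists (mask (take (size s1) m) s1), (mask (drop (size s1) m) s2).
by rewrite -mask_cat // cat_take_drop !mask_subseq.
Qed.

Lemma subseq_catI (T : eqType) (t1 t2 s : seq T) :
  subseq (t1 ++ t2) s -> exists s1 s2, s = s1 ++ s2 /\ subseq t1 s1 /\ subseq t2 s2.
Proof.
elim: s t1 => [|y s IH] t1.
  by case: t1 => // ; case: t2 => // _; exists [::], [::].
case: t1 => [|x t1] /=.
  by move=> h; exists [::], (y :: s); rewrite sub0seq.
case: eqP => [->|ne] h.
  have [s1 [s2 [-> [h1 h2]]]] := IH _ h.
  by exists (y :: s1), s2; rewrite /= eqxx.
have [s1 [s2 [-> [h1 h2]]]] := IH (x :: t1) h.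
exists (y :: s1), s2; split => //; split => //=.
by case: eqP => // e; case: ne.
Qed.

Lemma subseq_cons_tail (T : eqType) (x : T) t s : subseq (x :: t) s -> subseq t s.
Proof. by move=> h; apply: subseq_trans h; apply: subseq_cons. Qed.

Lemma subseq_consM (T : eqType) (x y : T) t s :
  subseq (x :: t) (y :: s) -> (x = y /\ subseq t s) \/ subseq (x :: t) s.
Proof. by rewrite /=; case: eqP => [->|_]; [left|right]. Qed.

Lemma same_orderE t sg : same_order t sg -> size t = size sg /\
  forall i j, i < size t -> j < size t ->
    (nth 0 t i < nth 0 t j) = (nth 0 sg i < nth 0 sg j).
Proof.
case/andP=> /eqP hs /forallP H; split=> // i j hi hj.
by have /forallP/(_ (Ordinal hj))/eqP := H (Ordinal hi).
Qed.

Lemma same_orderI t sg : size t = size sg ->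
  (forall i j, i < size t -> j < size t ->
    (nth 0 t i < nth 0 t j) = (nth 0 sg i < nth 0 sg j)) -> same_order t sg.
Proof.
move=> hs H; apply/andP; split; first by rewrite hs.
by apply/forallP=> i; apply/forallP=> j; rewrite H.
Qed.

Lemma avoidsP s sg :
  reflect (exists t, subseq t s /\ same_order t sg) (~~ avoids s sg).
Proof.
rewrite /avoids negb_forall; apply: (iffP existsP).
  by case=> m Hm; exists (mask m s); rewrite mask_subseq (negbNE Hm).
case=> t [/subseqP [m sm ->] Ht].
by exists (Tuple (introT eqP sm)); rewrite negbK.
Qed.

Definition has1324 (s : seq nat) :=
  exists a b c d, subseq [:: a; b; c; d] s /\ a < c /\ c < b /\ b < d.

Lemma has1324P s : has1324 s <-> ~~ avoids s p1324.
Proof.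
split.
  case=> a [b [c [d [hs hv]]]]; apply/avoidsP; exists [:: a; b; c; d]; split=> //.
  apply: same_orderI => //.
  by move=> [|[|[|[|i]]]] [|[|[|[|j]]]] //= hi hj; lia.
case/avoidsP=> t [hs /same_orderE [hz H]].
case: t hs hz H => [|a [|b [|c [|d [|]]]]] //= hs _ H.
exists a, b, c, d; split => //.
have h1 := H 0 2 erefl erefl; have h2 := H 2 1 erefl erefl; have h3 := H 1 3 erefl erefl.
simpl in h1, h2, h3; lia.
Qed.

Lemma nth_delta k i : i < k -> nth 0 (delta k) i = k - i.+1.
Proof.
move=> hi; rewrite /delta nth_rev ?size_iota // nth_iota //; lia.
Qed.

Lemma delta_ge4 s k : 4 <= k -> ~~ avoids s (delta k) ->
  exists a b c d, subseq [:: a; b; c; d] s /\ d < c /\ c < b /\ b < a.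
Proof.
move=> hk /avoidsP [t [hs /same_orderE [hz H]]].
rewrite /delta size_rev size_iota in hz.
case: t hs hz H => [|a [|b [|c [|d r]]]] //= hs hz H; try lia.
exists a, b, c, d; split.
  by apply: subseq_trans hs; apply: (@prefix_subseq _ [:: a; b; c; d] r).
have h1 := H 1 0 ltac:(lia) ltac:(lia).
have h2 := H 2 1 ltac:(lia) ltac:(lia).
have h3 := H 3 2 ltac:(lia) ltac:(lia).
rewrite /= !nth_delta in h1 h2 h3; try lia.
Qed.

Lemma delta3P s : ~~ avoids s (delta 3) <->
  exists a b c, subseq [:: a; b; c] s /\ c < b /\ b < a.
Proof.
split.
  case/avoidsP=> t [hs /same_orderE [hz H]].
  case: t hs hz H => [|a [|b [|c [|]]]] //= hs _ H.
  exists a, b, c; split => //.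
  have h1 := H 1 0 erefl erefl; have h2 := H 2 1 erefl erefl.
  simpl in h1, h2; lia.
case=> a [b [c [hs hv]]]; apply/avoidsP; exists [:: a; b; c]; split=> //.
apply: same_orderI => //.
by move=> [|[|[|i]]] [|[|[|j]]] //= hi hj; lia.
Qed.

Lemma subseq_mapE (g : nat -> nat) t s : subseq t (map g s) ->
  exists xs, subseq xs s /\ t = map g xs.
Proof.
by case/subseqP=> m sm ->; exists (mask m s); rewrite mask_subseq map_mask.
Qed.

Lemma subseq_iotaI k m t : sorted ltn t -> all (fun x => m <= x < m + k) t ->
  subseq t (iota m k).
Proof.
elim: k m t => [|k IH] m t.
  by case: t => //= x t _ /andP [h _]; lia.
case: t => [|x t] //= hs /andP [hx ht].
case: eqP => [<-|ne].
  apply: IH; first exact: path_sorted hs.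
  have := order_path_min ltn_trans hs.
  move=> /allP hall; apply/allP => y hy.
  have := allP ht y hy; have := hall y hy; simpl; lia.
apply: IH => //=; rewrite (_ : m.+1 + k = m + k.+1); last lia.
apply/andP; split; first lia.
have := order_path_min ltn_trans hs.
move=> /allP hall; apply/allP => y hy.
have := allP ht y hy; have := hall y hy; simpl; lia.
Qed.

Lemma subseq_iotaE t n : subseq t (iota 0 n) -> sorted ltn t /\ all (fun x => x < n) t.
Proof.
move=> h; split; first exact: (subseq_sorted ltn_trans h (iota_ltn_sorted 0 n)).
apply/allP => x /(mem_subseq h); rewrite mem_iota; lia.
Qed.

Definition dec3 (g : nat -> nat) n := exists x y z,
  x < y /\ y < z /\ z < n /\ g z < g y /\ g y < g x.
Definition dec4 (g : nat -> nat) n := exists x1 x2 x3 x4,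
  x1 < x2 /\ x2 < x3 /\ x3 < x4 /\ x4 < n /\ g x4 < g x3 /\ g x3 < g x2 /\ g x2 < g x1.

Lemma ol3 g n : ~~ avoids (map g (iota 0 n)) (delta 3) <-> dec3 g n.
Proof.
rewrite delta3P; split.
  case=> a [b [c [/subseq_mapE [xs [h1 h2]] hv]]].
  have [hs ha] := subseq_iotaE h1.
  case: xs h1 h2 hs ha => [|x [|y [|z [|]]]] //= _ [e1 e2 e3] hs ha; subst.
  exists x, y, z; move: hs ha; rewrite /= !andbT; lia.
case=> x [y [z [h1 [h2 [h3 [h4 h5]]]]]].
exists (g x), (g y), (g z); split => //.
apply: (@map_subseq _ _ g [:: x; y; z]); apply: subseq_iotaI => /=; lia.
Qed.

Lemma ol4 g n k : 4 <= k -> ~ dec4 g n -> avoids (map g (iota 0 n)) (delta k).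
Proof.
move=> hk hd; apply/negPn/negP => /(delta_ge4 hk).
case=> a [b [c [d [/subseq_mapE [xs [h1 h2]] hv]]]].
have [hs ha] := subseq_iotaE h1.
case: xs h1 h2 hs ha => [|x1 [|x2 [|x3 [|x4 [|]]]]] //= _ [e1 e2 e3 e4] hs ha; subst.
apply: hd; exists x1, x2, x3, x4; move: hs ha; rewrite /= !andbT; lia.
Qed.

Definition cyc1324 (w : seq nat) := exists i, has1324 (rot i w).

Lemma rot_back j (w : seq nat) : exists k, w = rot k (rot j w).
Proof.
exists (size w - minn j (size w)).
rewrite (rot_minn j) -rotD; last lia.
by rewrite subnK ?geq_minr // rot_size.
Qed.

Lemma cyc_rot1 j w : cyc1324 w -> cyc1324 (rot j w).
Proof.
case=> i h; have [k e] := rot_back j w.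
by exists (rot_add (rot j w) k i); rewrite -rot_rot_add -e.
Qed.

Lemma cyc_rot j w : cyc1324 (rot j w) <-> cyc1324 w.
Proof.
split; last exact: cyc_rot1.
by have [k e] := rot_back j w; rewrite {2}e; apply: cyc_rot1.
Qed.

Lemma cyc_forall w n : size w = n ->
  [forall i : 'I_n, avoids (rot i w) p1324] <-> ~ cyc1324 w.
Proof.
move=> hs; split.
  move=> /forallP H [i hi].
  case: (ltnP i n) => hin.
    by have := proj1 (has1324P _) hi; rewrite (H (Ordinal hin)).
  rewrite rot_oversize in hi; last lia.
  case: n hs H hin => [|n] hs H hin.
    by case: hi => a [b [c [d [h _]]]]; move: h; rewrite (size0nil hs).
  by have := proj1 (has1324P _) hi; have := H ord0; rewrite /= rot0 => ->.
move=> H; apply/forallP => i; apply/negPn/negP => /has1324P h.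
by apply: H; exists i.
Qed.

Lemma subseq4_cat (a b c d : nat) s1 s2 : subseq [:: a; b; c; d] (s1 ++ s2) ->
  subseq [:: a; b; c; d] s1 \/
      (subseq [:: a; b; c] s1 /\ subseq [:: d] s2) \/
      (subseq [:: a; b] s1 /\ subseq [:: c; d] s2) \/
      (subseq [:: a] s1 /\ subseq [:: b; c; d] s2) \/
      subseq [:: a; b; c; d] s2.
Proof.
case/subseq_catE=> t1 [t2 [e [h1 h2]]].
case: t1 e h1 => [|x1 [|x2 [|x3 [|x4 [|x5 t1]]]]] //= e h1.
- by subst; right; right; right; right.
- by case: e => ? ?; subst; right; right; right; left.
- by case: e => ? ? ?; subst; right; right; left.
- by case: e => ? ? ? ?; subst; right; left.
- by case: e => ? ? ? ? ?; subst; rewrite ?cats0 in h1; left.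
Qed.

Lemma subseq3_cat (a b c : nat) s1 s2 : subseq [:: a; b; c] (s1 ++ s2) ->
  [\/ subseq [:: a; b; c] s1,
      subseq [:: a; b] s1 /\ subseq [:: c] s2,
      subseq [:: a] s1 /\ subseq [:: b; c] s2 |
      subseq [:: a; b; c] s2].
Proof.
case/subseq_catE=> t1 [t2 [e [h1 h2]]].
case: t1 e h1 => [|x1 [|x2 [|x3 [|x4 t1]]]] //= e h1.
- by subst; constructor 4.
- by case: e => ? ?; subst; constructor 3.
- by case: e => ? ? ?; subst; constructor 2.
- by case: e => ? ? ? ?; subst; rewrite ?cats0 in h1; constructor 1.
Qed.

Definition lin4 (w : seq nat) := exists a b c d, a < c /\ c < b /\ b < d /\
  [\/ subseq [:: a; b; c; d] w, subseq [:: d; a; b; c] w,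
      subseq [:: c; d; a; b] w | subseq [:: b; c; d; a] w].

Lemma rot_lin4 i w : has1324 (rot i w) -> lin4 w.
Proof.
case=> a [b [c [d [hs hv]]]]; exists a, b, c, d; do 3 (split; first by lia).
rewrite -(cat_take_drop i w).
move: hs; rewrite /rot => /subseq4_cat [h|[[h1 h2]|[[h1 h2]|[[h1 h2]|h]]]].
- by constructor 1; apply: subseq_trans h (suffix_subseq _ _).
- by constructor 2; exact: (@cat_subseq _ [:: d] [:: a; b; c] _ _ h2 h1).
- by constructor 3; exact: (@cat_subseq _ [:: c; d] [:: a; b] _ _ h2 h1).
- by constructor 4; exact: (@cat_subseq _ [:: b; c; d] [:: a] _ _ h2 h1).
- by constructor 1; apply: subseq_trans h (prefix_subseq _ _).
Qed.

Definition has132 (u : seq nat) := exists a b c, subseq [:: a; b; c] u /\ a < c /\ c < b.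
Definition has3241 (u : seq nat) :=
  exists c b d a, subseq [:: c; b; d; a] u /\ a < b /\ b < c /\ c < d.

Lemma sub_has132 t u : subseq t u -> has132 t -> has132 u.
Proof. by move=> h [a [b [c [h1 h2]]]]; exists a, b, c; split => //; apply: subseq_trans h. Qed.
Lemma sub_has3241 t u : subseq t u -> has3241 t -> has3241 u.
Proof. by move=> h [a [b [c [d [h1 h2]]]]]; exists a, b, c, d; split => //; apply: subseq_trans h. Qed.

Lemma cyc_maxfirst M u : (forall x, x \in u -> x < M) ->
  cyc1324 (M :: u) <-> has132 u \/ has3241 u.
Proof.
move=> hM; split.
  case=> i /rot_lin4 [a [b [c [d [h1 [h2 [h3 H]]]]]]].
  have hle : forall x t, subseq (x :: t) (M :: u) -> x <= M.
    move=> x t /mem_subseq /(_ x); rewrite inE eqxx => /(_ isT).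
    by rewrite inE => /orP [/eqP ->|/hM]; lia.
  case: H => h.
  - have := hle _ _ (subseq_cons_tail (subseq_cons_tail h)).
    case/subseq_consM: h => [[e _]|h]; first lia.
    by left; exists a, b, c; split => //; apply: subseq_trans h; rewrite /= !eqxx ?sub0seq.
  - case/subseq_consM: h => [[e h]|h].
      by left; exists a, b, c.
    left; exists a, b, c; split => //; exact: subseq_cons_tail h.
  - have := hle _ _ (subseq_cons_tail h).
    case/subseq_consM: h => [[e _]|h]; first lia.
    left; exists c, d, b; split; last lia.
    by apply: subseq_trans h; rewrite /= !eqxx; case: eqP => _; rewrite ?eqxx ?sub0seq.
  - have := hle _ _ (subseq_cons_tail (subseq_cons_tail h)).
    case/subseq_consM: h => [[e _]|h]; first lia.
    by right; exists b, c, d, a.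
case=> [[a [b [c [h1 h2]]]]|[c [b [d [a [h1 h2]]]]]].
  exists 1; rewrite rot1_cons -cats1.
  exists a, b, c, M; split; last by have := hM b; rewrite (mem_subseq h1) ?inE ?eqxx ?orbT //; lia.
  by apply: (@cat_subseq _ [:: a; b; c] [:: M]) => //=; rewrite eqxx.
have [s1 [s2 [e [k1 k2]]]] := @subseq_catI _ [:: c; b; d] [:: a] _ h1.
exists (size (M :: s1)); rewrite e -cat_cons rot_size_cat.
exists a, c, b, d; split; last lia.
by apply: (@cat_subseq _ [:: a] [:: c; b; d]) => //; apply: subseq_trans k1 (subseq_cons _ _).
Qed.

Definition good (u : seq nat) := ~ has132 u /\ ~ has3241 u.

Lemma good_sub t u : subseq t u -> good u -> good t.
Proof.
move=> h [g1 g2]; split => [h1|h2]; [apply: g1|apply: g2].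
  exact: sub_has132 h h1.
exact: sub_has3241 h h2.
Qed.

Lemma mem_perm_iota u m x : perm_eq u (iota 0 m) -> (x \in u) = (x < m).
Proof. by move/perm_mem => ->; rewrite mem_iota. Qed.

Lemma sub_size2 (x y z : nat) : ~ subseq [:: x; y] [:: z].
Proof. by move/size_subseq. Qed.
Lemma sub_size3 (x y w z : nat) : ~ subseq [:: x; y; w] [:: z].
Proof. by move/size_subseq. Qed.
Lemma sub_size4 (x y w v z : nat) : ~ subseq [:: x; y; w; v] [:: z].
Proof. by move/size_subseq. Qed.

Lemma good_E1 m a : perm_eq a (iota 0 m) -> good a -> good (a ++ [:: m]).
Proof.
move=> hp [g1 g2].
have ha : forall x, subseq [:: x] a -> x < m by move=> x; rewrite sub1seq (mem_perm_iota _ hp).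
have hm : forall x, subseq [:: x] [:: m] -> x = m by move=> x; rewrite sub1seq inE => /eqP.
split.
  case=> x [y [z [/subseq3_cat H hv]]].
  case: H => [h|[h1 h2]|[h1 h2]|h].
  - by apply: g1; exists x, y, z.
  - have := hm _ h2; have := ha y (subseq_cons_tail h1); lia.
  - exact: sub_size2 h2.
  - exact: sub_size3 h.
case=> c [b [d [x [/subseq4_cat H hv]]]].
case: H => [h|[[h1 h2]|[[h1 h2]|[[h1 h2]|h]]]].
- by apply: g2; exists c, b, d, x.
- have := hm _ h2.
  have := ha b; rewrite sub1seq (mem_subseq h1) ?inE ?eqxx ?orbT // => /(_ isT); lia.
- exact: sub_size2 h2.
- exact: sub_size3 h2.
- exact: sub_size4 h.
Qed.

Lemma sub2_iota x y j k t : subseq (x :: y :: t) (iota j k) -> x < y.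
Proof.
move=> h.
have : sorted ltn (x :: y :: t) by exact: (subseq_sorted ltn_trans h (iota_ltn_sorted j k)).
by case/andP.
Qed.

Lemma sub_consR x t (m : nat) b : subseq (x :: t) (m :: b) ->
  (x = m \/ x \in b) /\ subseq t b.
Proof.
case/subseq_consM => [[-> h]|h]; first by split => //; left.
split; last exact: subseq_cons_tail h.
by right; apply: (mem_subseq h); rewrite inE eqxx.
Qed.

Lemma good_E2 m j b : 0 < j <= m -> perm_eq b (iota 0 j) -> good b ->
  good (iota j (m - j) ++ m :: b).
Proof.
move=> hj hp [g1 g2].
have hb : forall x, x \in b -> x < j by move=> x; rewrite (mem_perm_iota _ hp).
have hI : forall x, subseq [:: x] (iota j (m - j)) -> j <= x < m.
  by move=> x; rewrite sub1seq mem_iota; lia.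
have hb2 : forall x y, subseq [:: x; y] b -> x < j /\ y < j.
  move=> x y h; split; apply: hb; apply: (mem_subseq h); by rewrite !inE eqxx ?orbT.
split.
  case=> x [y [z [/subseq3_cat H hv]]].
  case: H => [h|[h1 h2]|[h1 h2]|h].
  - have := sub2_iota (subseq_cons_tail h); lia.
  - have := hI x (subseq_trans (prefix_subseq [:: x] [:: y]) h1).
    have := hI y (subseq_cons_tail h1).
    move: h2; rewrite sub1seq inE => /orP [/eqP ?|/hb]; lia.
  - have := hI x h1.
    case/sub_consR: h2 => _; rewrite sub1seq => /hb; lia.
  - case/subseq_consM: h => [[e h]|h]; last by apply: g1; exists x, y, z.
    have : z \in b by apply: (mem_subseq h); rewrite !inE eqxx ?orbT.
    move/hb; lia.
case=> c [y [d [x [/subseq4_cat H hv]]]].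
case: H => [h|[[h1 h2]|[[h1 h2]|[[h1 h2]|h]]]].
- have := sub2_iota h; lia.
- have := sub2_iota h1; lia.
- have := sub2_iota h1; lia.
- have := hI c h1.
  case/sub_consR: h2 => _ h.
  have : d \in b by apply: (mem_subseq h); rewrite !inE eqxx ?orbT.
  move/hb; lia.
- case/subseq_consM: h => [[e h]|h]; last by apply: g2; exists c, y, d, x.
  have : d \in b by apply: (mem_subseq h); rewrite !inE eqxx ?orbT.
  move/hb; lia.
Qed.

Lemma noinv_sorted (a : seq nat) : uniq a ->
  (forall x y, subseq [:: x; y] a -> x < y) -> sorted ltn a.
Proof.
elim: a => [|x a IH] // /andP [hx hu] H.
case: a IH hx hu H => [|y a] IH hx hu H; first by [].
have hxy : x < y by apply: H; exact: (prefix_subseq [:: x; y] a).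
rewrite /= hxy /=.
apply: (IH hu) => u v h; apply: H; apply: subseq_trans h _; exact: subseq_cons.
Qed.

Lemma sorted_catI (s1 s2 : seq nat) : sorted ltn s1 -> sorted ltn s2 ->
  (forall x y, x \in s1 -> y \in s2 -> x < y) -> sorted ltn (s1 ++ s2).
Proof.
case: s1 => [|x s1] //= h1 h2 H.
rewrite cat_path h1 /=.
case: s2 h2 H => [|y s2] //= h2 H.
rewrite h2 andbT; apply: H; last by rewrite inE eqxx.
by rewrite mem_last.
Qed.

Lemma iotaSr m : iota 0 m.+1 = iota 0 m ++ [:: m].
Proof. by rewrite -addn1 iotaD. Qed.

Lemma good_split m u : perm_eq u (iota 0 m.+1) -> good u ->
  (exists a, u = a ++ [:: m] /\ perm_eq a (iota 0 m) /\ good a) \/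
  (exists j b, 0 < j <= m /\ u = iota j (m - j) ++ m :: b /\ perm_eq b (iota 0 j) /\ good b).
Proof.
move=> hp hg.
have hm : m \in u by rewrite (mem_perm_iota _ hp).
have hu : uniq u by rewrite (perm_uniq hp) iota_uniq.
case/splitPr: hm hp hg hu => a b hp hg hu.
have hab : perm_eq (a ++ b) (iota 0 m).
  rewrite -(perm_cat2r [:: m]) -iotaSr; apply: perm_trans _ hp.
  by rewrite -catA perm_cat2l -cat1s perm_catC.
have hsa : subseq a (a ++ m :: b) by apply: prefix_subseq.
have hsb : subseq b (a ++ m :: b).
  by apply: subseq_trans (suffix_subseq a _); apply: subseq_cons.
have hlt : forall x, x \in a ++ b -> x < m by move=> x; rewrite (mem_perm_iota _ hab).
case: b hp hg hu hab hsa hsb hlt => [|b0 b] hp hg hu hab hsa hsb hlt.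
  left; exists a; split => //; split; first by rewrite cats0 in hab.
  exact: good_sub hsa hg.
right.
have ua : uniq a := subseq_uniq hsa hu.
have ub : uniq (b0 :: b) := subseq_uniq hsb hu.
have := hu; rewrite cat_uniq => /and3P [_ hna _].
have hdis : forall x y, x \in a -> y \in b0 :: b -> x != y.
  move=> x y xa yb; apply/eqP => e; subst y.
  by move/negP: hna; apply; apply/hasP; exists x; rewrite // inE yb orbT.
have c1 : forall x y, x \in a -> y \in b0 :: b -> y < x.
  move=> x y xa yb.
  have := hdis x y xa yb; have := hlt x; rewrite mem_cat xa => /(_ isT).
  have := hlt y; rewrite mem_cat yb orbT => /(_ isT).
  case: (ltnP y x) => // hyx hy hx hne.
  exfalso; case: hg => g1 _; apply: g1; exists x, m, y; split; last lia.
  apply: (@cat_subseq _ [:: x] [:: m; y]); first by rewrite sub1seq.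
  by apply: (@cat_subseq _ [:: m] [:: y] [:: m] (b0 :: b)); rewrite sub1seq ?inE ?eqxx.

have c2 : sorted ltn a.
  apply: noinv_sorted => // x y hxy.
  have xa : x \in a by apply: (mem_subseq hxy); rewrite inE eqxx.
  have ya : y \in a by apply: (mem_subseq hxy); rewrite !inE eqxx orbT.
  have hx := hlt x; rewrite mem_cat xa in hx; have := hx isT.
  case: (ltnP x y) => // hyx _.
  have hne : x != y.
    apply/eqP => e; subst y; move: (subseq_uniq hxy ua); by rewrite /= inE eqxx.
  have hb0 := c1 y b0 ya; rewrite inE eqxx in hb0; have := hb0 isT.
  move=> h0; exfalso; case: hg => _ g2; apply: g2; exists x, y, m, b0; split; last lia.
  apply: (@cat_subseq _ [:: x; y] [:: m; b0]) => //.
  by apply: (@cat_subseq _ [:: m] [:: b0] [:: m] (b0 :: b)); rewrite sub1seq ?inE ?eqxx.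
set j := size (b0 :: b).
have hsz : size a + j = m by rewrite -size_cat (perm_size hab) size_iota.
have hsort : sort leq (b0 :: b) ++ a = iota 0 j ++ iota j (m - j).
  rewrite -iotaD (_ : j + (m - j) = m); last lia.
  apply: (irr_sorted_eq ltn_trans ltnn).
  - apply: sorted_catI => //.
    + rewrite ltn_sorted_uniq_leq sort_sorted ?andbT; last exact: leq_total.
      by rewrite (perm_uniq (permEl (perm_sort _ _))).
    + by move=> x y; rewrite mem_sort => xb ya; apply: c1.
  - exact: iota_ltn_sorted.
  - by move=> x; rewrite -(perm_mem hab) !mem_cat mem_sort orbC.
move/eqP: hsort; rewrite eqseq_cat; last by rewrite size_sort size_iota.
case/andP => /eqP hs1 /eqP ha.
exists j, (b0 :: b); split; first by move: hsz; rewrite /j /=; lia.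
split; first by rewrite ha.
split; last exact: good_sub hsb hg.
by rewrite -hs1 perm_sym; apply/permEl/perm_sort.
Qed.

Definition stepG m (L : seq (seq (seq nat))) : seq (seq nat) :=
  [seq a ++ [:: m] | a <- nth [::] L m] ++
  flatten [seq [seq iota j (m - j) ++ m :: b | b <- nth [::] L j] | j <- iota 1 m].

Fixpoint genAll m : seq (seq (seq nat)) :=
  if m is m'.+1 then rcons (genAll m') (stepG m' (genAll m')) else [:: [:: [::]]].

Definition gen m := nth [::] (genAll m) m.

Lemma size_genAll m : size (genAll m) = m.+1.
Proof. by elim: m => //= m IH; rewrite size_rcons IH. Qed.

Lemma nth_genAll m j : j <= m -> nth [::] (genAll m) j = gen j.
Proof.
elim: m j => [|m IH] j hj; first by case: j hj.
rewrite /= nth_rcons size_genAll.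
case: (ltnP j m.+1) => h; first by apply: IH.
have -> : j = m.+1 by lia.
by rewrite eqxx /gen /= nth_rcons size_genAll ltnn eqxx.
Qed.

Lemma genS m : gen m.+1 = [seq a ++ [:: m] | a <- gen m] ++
  flatten [seq [seq iota j (m - j) ++ m :: b | b <- gen j] | j <- iota 1 m].
Proof.
rewrite {1}/gen /= nth_rcons size_genAll ltnn eqxx /stepG nth_genAll //.
congr (_ ++ flatten _); apply/eq_in_map => j; rewrite mem_iota => hj.
by rewrite nth_genAll //; lia.
Qed.

Lemma perm_E1 m a : perm_eq (a ++ [:: m]) (iota 0 m.+1) = perm_eq a (iota 0 m).
Proof. by rewrite iotaSr perm_cat2r. Qed.

Lemma perm_E2 m j b : j <= m ->
  perm_eq (iota j (m - j) ++ m :: b) (iota 0 m.+1) = perm_eq b (iota 0 j).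
Proof.
move=> hj.
rewrite iotaSr (_ : iota 0 m = iota 0 j ++ iota j (m - j)); last first.
  by rewrite -iotaD; congr iota; lia.
rewrite -cat1s catA perm_catC -catA perm_cat2r //.
Qed.

Lemma mem_gen m u : u \in gen m <-> perm_eq u (iota 0 m) /\ good u.
Proof.
elim/ltn_ind: m u => m IH u.
case: m IH => [|m] IH.
  rewrite /gen /= inE; split.
    move/eqP => ->; split => //; split.
      by case=> a [b [c [h _]]].
    by case=> a [b [c [d [h _]]]].
  by case=> /perm_size /size0nil ->.
rewrite genS mem_cat; split.
  case/orP.
    case/mapP => a ha ->.
    have [hp hg] := (IH m (ltnSn m) a).1 ha.
    by rewrite perm_E1; split => //; apply: good_E1.
  case/flattenP => s /mapP [j hj ->] /mapP [b hb ->].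
  move: hj; rewrite mem_iota => hj.
  have [hp hg] := (IH j ltac:(lia) b).1 hb.
  by rewrite perm_E2; [split => //; apply: good_E2 => //; lia | lia].
case=> hp hg; case: (good_split hp hg) => [[a [-> [ha ga]]]|[j [b [hj [-> [hb gb]]]]]].
  apply/orP; left; apply/mapP; exists a => //.
  by apply/(IH m (ltnSn m)).
apply/orP; right; apply/flattenP.
exists [seq iota j (m - j) ++ m :: b0 | b0 <- gen j].
  by apply/mapP; exists j => //; rewrite mem_iota; lia.
apply/mapP; exists b => //; apply/(IH j); [lia | by split].
Qed.

Lemma uniq_flat_key (K : seq nat -> nat) (F : nat -> seq nat -> seq nat)
    (G : nat -> seq (seq nat)) s :
  uniq s -> (forall j, j \in s -> uniq (G j) /\ {in G j &, injective (F j)} /\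
    forall b, b \in G j -> K (F j b) = j) ->
  uniq (flatten [seq [seq F j b | b <- G j] | j <- s]).
Proof.
elim: s => [|j s IH] //= /andP [hj hs] H.
have [u1 [i1 k1]] := H j (mem_head _ _).
rewrite cat_uniq map_inj_in_uniq // u1 /= IH ?andbT //; last first.
  by move=> j' h'; apply: H; rewrite inE h' orbT.
apply/hasP => -[x /flattenP [t /mapP [j' hj' ->] /mapP [b hb ->]] /mapP [b' hb' e]].
have hj2 : j' \in j :: s by rewrite inE hj' orbT.
have := (H j' hj2).2.2 b hb.
rewrite e k1 // => ej; subst j'.
by move/negP: hj.
Qed.

Definition key m (u : seq nat) := m - index m u.

Lemma uniq_gen m : uniq (gen m).
Proof.
elim/ltn_ind: m => m IH.
case: m IH => [|m] IH; first by [].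
rewrite genS cat_uniq.
have notm : forall a, a \in gen m -> m \notin a.
  by move=> a /mem_gen [hp _]; rewrite (mem_perm_iota _ hp) ltnn.
apply/and3P; split.
- rewrite map_inj_uniq; first exact: IH.
  by move=> x y; rewrite !cats1; apply: rcons_injl.
- apply/hasP => -[x /flattenP [t /mapP [j hj ->] /mapP [b hb ->]] /mapP [a ha e]].
  have : key m (a ++ [:: m]) = 0.
    rewrite /key index_cat (negbTE (notm a ha)) /= eqxx addn0.
    by have [hp _] := (mem_gen _ _).1 ha; rewrite (perm_size hp) size_iota subnn.
  rewrite -e /key index_cat; move: hj; rewrite mem_iota => hj.
  have -> : (m \in iota j (m - j)) = false by rewrite mem_iota; lia.
  by rewrite /= eqxx size_iota; lia.
- apply: (@uniq_flat_key (key m) (fun j b => iota j (m - j) ++ m :: b) gen (iota 1 m)).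
    exact: iota_uniq.
  move=> j; rewrite mem_iota => hj; split; first by apply: IH; lia.
  split.
    by move=> x y _ _ /eqP; rewrite eqseq_cat // => /andP [_ /eqP [e]].
  move=> b _; rewrite /key index_cat.
  have -> : (m \in iota j (m - j)) = false by rewrite mem_iota; lia.
  by rewrite /= eqxx size_iota; lia.
Qed.

Lemma fibSS k : fib k.+2 = fib k.+1 + fib k.
Proof. by []. Qed.

Lemma sum_fib k : sumn [seq fib (2 * j - 1) | j <- iota 1 k] = fib (2 * k).
Proof.
elim: k => [|k IH] //.
rewrite (_ : iota 1 k.+1 = iota 1 k ++ [:: k.+1]); last by rewrite -[k.+1]addn1 iotaD addnC.
rewrite map_cat sumn_cat IH.
rewrite (_ : sumn [seq fib (2 * j - 1) | j <- [:: k.+1]] = fib (2 * k.+1 - 1)); last by rewrite /= addn0.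
rewrite (_ : 2 * k.+1 - 1 = (2 * k).+1); last lia.
rewrite (_ : 2 * k.+1 = (2 * k).+2); last lia.
by rewrite fibSS addnC.
Qed.

Lemma size_genS m : size (gen m.+1) =
  size (gen m) + sumn [seq size (gen j) | j <- iota 1 m].
Proof.
rewrite genS size_cat size_map size_flatten /shape -map_comp.
by congr (_ + sumn _); apply: eq_map => j /=; rewrite size_map.
Qed.

Lemma size_gen m : 0 < m -> size (gen m) = fib (2 * m - 1).
Proof.
elim/ltn_ind: m => m IH hm.
case: m IH hm => [|k] // IH _.
rewrite size_genS.
case: k IH => [|k] IH; first by [].
rewrite IH // (_ : [seq size (gen j) | j <- iota 1 k.+1] = [seq fib (2*j-1) | j <- iota 1 k.+1]); last first.
  by apply/eq_in_map => j; rewrite mem_iota => hj; apply: IH; lia.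
rewrite sum_fib.
rewrite (_ : 2 * k.+2 - 1 = (2 * k.+1).+1); last lia.
rewrite (_ : 2 * k.+1 - 1 = (2 * k).+1); last lia.
by rewrite (_ : 2 * k.+1 = (2 * k).+2) ?fibSS; lia.
Qed.

Lemma next_in (y : nat) p x : x \in y :: p -> next (y :: p) x = nth y p (index x (y :: p)).
Proof. by move=> h; rewrite next_nth h. Qed.

Lemma index_iota x j k : j <= x < j + k -> index x (iota j k) = x - j.
Proof.
move=> h.
have -> : x = nth 0 (iota j k) (x - j) by rewrite nth_iota; lia.
rewrite index_uniq ?iota_uniq ?size_iota; rewrite ?nth_iota; lia.
Qed.

Lemma nthE1 (d m : nat) a k : k <= size a -> nth d (a ++ [:: m]) k = nth m a k.
Proof.
move=> hk; rewrite nth_cat; case: ltnP => h.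
  exact: set_nth_default.
by rewrite (_ : k - size a = 0) ?(nth_default m) //=; lia.
Qed.

Lemma index_cons (x y : nat) s : index x (y :: s) = if y == x then 0 else (index x s).+1.
Proof. by []. Qed.
Lemma nth_consS (d y : nat) s n : nth d (y :: s) n.+1 = nth d s n.
Proof. by []. Qed.

Lemma next_E1 m a x : perm_eq a (iota 0 m) -> x < m.+2 ->
  next (m.+1 :: a ++ [:: m]) x =
  if x == m then m.+1 else if x == m.+1 then next (m :: a) m else next (m :: a) x.
Proof.
move=> hp hx.
have sa : size a = m by rewrite (perm_size hp) size_iota.
have ma : forall y, (y \in a) = (y < m) by move=> y; rewrite (mem_perm_iota _ hp).
rewrite next_in; last by rewrite inE mem_cat ma inE; apply/orP; lia.
rewrite index_cons index_cat ma.
case: (eqVneq x m.+1) => [->|hx1].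
  rewrite ?eqxx (_ : (m.+1 == m) = false); last lia.
  by rewrite next_in ?mem_head // index_cons eqxx nthE1 ?sa.
case: (eqVneq x m) => [->|hxm].
  rewrite ltnn index_cons eqxx addn0 nth_default // size_cat sa /=; lia.
have xm : x < m by lia.
rewrite xm next_in; last by rewrite inE ma xm orbT.
rewrite index_cons (_ : (m == x) = false); last lia.
by rewrite nthE1 // index_mem ma.
Qed.

Lemma next_E2 m j b x : 0 < j <= m -> perm_eq b (iota 0 j) -> x < m.+2 ->
  next (m.+1 :: iota j (m - j) ++ m :: b) x =
  if x < j then (if next (j :: b) x == j then m.+1 else next (j :: b) x)
  else if x < m then x.+1 else if x == m then next (j :: b) j else j.
Proof.
move=> hj hp hx.
have sb : size b = j by rewrite (perm_size hp) size_iota.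
have mb : forall y, (y \in b) = (y < j) by move=> y; rewrite (mem_perm_iota _ hp).
have mI : forall y, (y \in iota j (m - j)) = (j <= y < m) by move=> y; rewrite mem_iota; lia.
have hpn : perm_eq (iota j (m - j) ++ m :: b) (iota 0 m.+1) by rewrite perm_E2 //; lia.
rewrite next_in; last first.
  by rewrite inE (perm_mem hpn) mem_iota; apply/orP; lia.
rewrite index_cons index_cat mI.
case: (eqVneq x m.+1) => [->|hx1].
  rewrite ?eqxx nth_cat size_iota.
  case: (ltnP 0 (m - j)) => h.
    rewrite nth_iota //; rewrite (_ : m.+1 < j = false); last lia.
    rewrite (_ : m.+1 < m = false); last lia.
    rewrite (_ : (m.+1 == m) = false); last lia.
    lia.
  rewrite (_ : 0 - (m - j) = 0); last lia.
  rewrite nth0 /= (_ : m.+1 < j = false); last lia.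
  rewrite (_ : m.+1 < m = false); last lia.
  rewrite (_ : (m.+1 == m) = false); last lia.
  lia.
case: (ltnP x j) => xj.
  rewrite andFb.
  rewrite index_cons (_ : (m == x) = false); last lia.
  rewrite size_iota next_in; last by rewrite inE mb xj orbT.
  rewrite index_cons (_ : (j == x) = false); last lia.
  rewrite nth_cat size_iota (_ : (m - j + (index x b).+1).+1 < m - j = false); last lia.
  rewrite (_ : (m - j + (index x b).+1).+1 - (m - j) = (index x b).+2); last lia.
  rewrite nth_consS.
  have hi : index x b < size b by rewrite index_mem mb.
  case: (ltnP (index x b).+1 (size b)) => h.
    rewrite (set_nth_default j) //.
    have : nth j b (index x b).+1 \in b by apply: mem_nth.
    by rewrite mb => hl; rewrite (_ : (_ == j) = false) //; lia.
  by rewrite !nth_default // eqxx.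
case: (ltnP x m) => xm.
  rewrite andbT.
  rewrite index_iota; last lia.
  rewrite nth_cat size_iota.
  case: (ltnP (x - j).+1 (m - j)) => h; first by rewrite nth_iota; lia.
  rewrite (_ : (x - j).+1 - (m - j) = 0); [rewrite /=; lia | lia].
have -> : x = m by lia.
rewrite ?ltnn ?andbF ?eqxx index_cons ?eqxx.
rewrite size_iota (_ : (m - j + 0).+1 = (m - j).+1); last lia.
rewrite nth_cat size_iota (_ : (m - j).+1 < m - j = false); last lia.
rewrite (_ : (m - j).+1 - (m - j) = 1); last lia.
rewrite nth_consS.
rewrite next_in ?mem_head // index_cons eqxx.
case: b hp sb mb hpn => [|b0 b] //= hp sb mb _; lia.
Qed.

Section E1.
Variables (f f' : nat -> nat) (m : nat).
Hypothesis hb : forall x, x <= m -> f x <= m.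
Hypothesis hf : forall x, x < m.+2 ->
  f' x = if x == m then m.+1 else if x == m.+1 then f m else f x.

Lemma RE1 x : x < m.+2 -> (x < m /\ f' x = f x /\ f x <= m) \/
  (x = m /\ f' x = m.+1) \/ (x = m.+1 /\ f' x = f m /\ f m <= m).
Proof.
move=> hx; rewrite hf //.
case: (eqVneq x m) => [->|h1]; first by right; left.
case: (eqVneq x m.+1) => [->|h2]; first by right; right; split => //; split => //; apply: hb.
left; split; first lia; split => //; apply: hb; lia.
Qed.

Lemma dec3_E1 : dec3 f' m.+2 <-> dec3 f m.+1.
Proof.
split.
  case=> x [y [z [h1 [h2 [h3 [h4 h5]]]]]].
  have := RE1 (x := x) ltac:(lia); have := RE1 (x := y) ltac:(lia);
  have := RE1 (x := z) ltac:(lia) => Rz Ry Rx.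
  have [hy hz] : y < m /\ (z < m \/ z = m.+1) by lia.
  case: hz => hz.
    by exists x, y, z; lia.
  by exists x, y, m; lia.
case=> x [y [z [h1 [h2 [h3 [h4 h5]]]]]].
have := RE1 (x := x) ltac:(lia); have := RE1 (x := y) ltac:(lia);
have := RE1 (x := z) ltac:(lia); have := RE1 (x := m.+1) ltac:(lia) => R1 Rz Ry Rx.
case: (ltnP z m) => hz.
  by exists x, y, z; lia.
have ez : z = m by lia.
subst z; by exists x, y, m.+1; lia.
Qed.

Lemma dec4_E1 : dec4 f' m.+2 -> dec4 f m.+1.
Proof.
case=> x1 [x2 [x3 [x4 [h1 [h2 [h3 [h4 [h5 [h6 h7]]]]]]]]].
have := RE1 (x := x1) ltac:(lia); have := RE1 (x := x2) ltac:(lia);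
have := RE1 (x := x3) ltac:(lia); have := RE1 (x := x4) ltac:(lia) => R4 R3 R2 R1.
have [hy hz] : x3 < m /\ (x4 < m \/ x4 = m.+1) by lia.
case: hz => hz.
  by exists x1, x2, x3, x4; lia.
by exists x1, x2, x3, m; lia.
Qed.
End E1.

Section E2.
Variables (f f' : nat -> nat) (m j : nat).
Hypothesis hj : 0 < j <= m.
Hypothesis hb : forall x, x <= j -> f x <= j.
Hypothesis hfj : f j < j.
Hypothesis hx0 : exists2 x0, x0 < j & f x0 = j.
Hypothesis hf : forall x, x < m.+2 ->
  f' x = if x < j then (if f x == j then m.+1 else f x)
         else if x < m then x.+1 else if x == m then f j else j.

Lemma RE2 x : x < m.+2 ->
  (x < j /\ ((f x = j /\ f' x = m.+1) \/ (f x < j /\ f' x = f x))) \/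
  (j <= x < m /\ f' x = x.+1) \/ (x = m /\ f' x = f j) \/ (x = m.+1 /\ f' x = j).
Proof.
move=> hx; rewrite hf //.
case: (ltnP x j) => h1.
  left; split => //.
  have := hb (x := x) ltac:(lia).
  case: eqP => e; [left|right]; lia.
case: (ltnP x m) => h2; first by right; left; lia.
case: (eqVneq x m) => [->|h3]; first by right; right; left.
right; right; right; lia.
Qed.

Lemma dec4_E2 : dec4 f' m.+2 -> dec4 f j.+1.
Proof.
case=> x1 [x2 [x3 [x4 [h1 [h2 [h3 [h4 [h5 [h6 h7]]]]]]]]].
have := RE2 (x := x1) ltac:(lia); have := RE2 (x := x2) ltac:(lia);
have := RE2 (x := x3) ltac:(lia); have := RE2 (x := x4) ltac:(lia) => R4 R3 R2 R1.
have [hy hz] : x3 < j /\ (x4 < j \/ x4 = m) by lia.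
case: hz => hz.
  by exists x1, x2, x3, x4; lia.
by exists x1, x2, x3, j; lia.
Qed.

Lemma dec3_E2 : dec3 f' m.+2 <-> (j < m \/ dec3 f j.+1).
Proof.
split.
  case=> x [y [z [h1 [h2 [h3 [h4 h5]]]]]].
  case: (ltnP j m) => hjm; first by left.
  right.
  have := RE2 (x := x) ltac:(lia); have := RE2 (x := y) ltac:(lia);
  have := RE2 (x := z) ltac:(lia) => Rz Ry Rx.
  have [hy hz] : y < j /\ (z < j \/ z = m) by lia.
  case: hz => hz.
    by exists x, y, z; lia.
  by exists x, y, j; lia.
case.
  move=> hjm; case: hx0 => x0 h0 e0.
  have := RE2 (x := x0) ltac:(lia); have := RE2 (x := j) ltac:(lia);
  have := RE2 (x := m.+1) ltac:(lia) => R3 R2 R1.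
  by exists x0, j, m.+1; lia.
case=> x [y [z [h1 [h2 [h3 [h4 h5]]]]]].
have := RE2 (x := x) ltac:(lia); have := RE2 (x := y) ltac:(lia);
have := RE2 (x := z) ltac:(lia); have := RE2 (x := m) ltac:(lia) => Rm Rz Ry Rx.
have := hb (x := x) ltac:(lia); have := hb (x := y) ltac:(lia); have := hb (x := z) ltac:(lia).
move=> bz b_y bx.
case: (ltnP z j) => hz.
  by exists x, y, z; lia.
have ez : z = j by lia.
subst z; by exists x, y, m; lia.
Qed.
End E2.

Lemma word_perm m u : perm_eq u (iota 0 m) -> perm_eq (m :: u) (iota 0 m.+1).
Proof. by move=> hp; rewrite iotaSr -cat1s perm_catC perm_cat2r. Qed.

Lemma word_bound m u : perm_eq u (iota 0 m) -> forall x, x <= m -> next (m :: u) x <= m.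
Proof.
move=> hp x hx.
have hw := perm_mem (word_perm hp).
have : next (m :: u) x \in m :: u by rewrite mem_next hw mem_iota; lia.
by rewrite hw mem_iota; lia.
Qed.

Lemma Q_E1 m a : perm_eq a (iota 0 m) ->
  (dec3 (next (m.+1 :: a ++ [:: m])) m.+2 <-> dec3 (next (m :: a)) m.+1) /\
  (dec4 (next (m.+1 :: a ++ [:: m])) m.+2 -> dec4 (next (m :: a)) m.+1).
Proof.
move=> hp; split.
  apply: dec3_E1; first exact: word_bound.
  by move=> x hx; apply: next_E1.
apply: dec4_E1; first exact: word_bound.
by move=> x hx; apply: next_E1.
Qed.

Lemma Q_E2 m j b : 0 < j <= m -> perm_eq b (iota 0 j) ->
  (dec3 (next (m.+1 :: iota j (m - j) ++ m :: b)) m.+2 <->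
     (j < m \/ dec3 (next (j :: b)) j.+1)) /\
  (dec4 (next (m.+1 :: iota j (m - j) ++ m :: b)) m.+2 -> dec4 (next (j :: b)) j.+1).
Proof.
move=> hj hp.
have hb := word_bound hp.
have mb : forall y, (y \in b) = (y < j) by move=> y; rewrite (mem_perm_iota _ hp).
have sb : size b = j by rewrite (perm_size hp) size_iota.
have hfj : next (j :: b) j < j.
  rewrite next_in ?mem_head // index_cons eqxx.
  case: b hp mb sb hb => [|b0 b] hp mb /= sb _; first lia.
  by rewrite -mb mem_head.
have hu : uniq (j :: b) by rewrite (perm_uniq (word_perm hp)) iota_uniq.
have hx0 : exists2 x0, x0 < j & next (j :: b) x0 = j.
  exists (prev (j :: b) j); last by rewrite (next_prev hu).
  have : prev (j :: b) j \in j :: b by rewrite mem_prev mem_head.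
  rewrite inE mb => /orP [/eqP e|//].
  by move: hfj; rewrite -[X in next _ X < _]e (next_prev hu) ltnn.
have hf := fun x (hx : x < m.+2) => next_E2 hj hp hx.
split; first exact: dec3_E2 hj hb hfj hx0 hf.
exact: dec4_E2 hj hb hfj hf.
Qed.

Lemma gen_cases m u : u \in gen m.+1 ->
  (exists2 a, a \in gen m & u = a ++ [:: m]) \/
  (exists j b, [/\ 0 < j <= m, b \in gen j & u = iota j (m - j) ++ m :: b]).
Proof.
rewrite genS mem_cat => /orP [/mapP [a ha ->]|]; first by left; exists a.
case/flattenP => s /mapP [j hj ->] /mapP [b hb ->].
right; exists j, b; split => //; move: hj; rewrite mem_iota; lia.
Qed.

Lemma no_dec4 m u : u \in gen m -> ~ dec4 (next (m :: u)) m.+1.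
Proof.
elim/ltn_ind: m u => m IH u.
case: m IH => [|m] IH.
  by move=> _ [x1 [x2 [x3 [x4 H]]]]; lia.
case/gen_cases => [[a ha ->]|[j [b [hj hb ->]]]].
  have [hp _] := (mem_gen _ _).1 ha.
  by move/((Q_E1 hp).2); apply: IH.
have [hp _] := (mem_gen _ _).1 hb.
move/((Q_E2 hj hp).2); apply: IH => //; lia.
Qed.

Definition Q m u := avoids (map (next (m :: u)) (iota 0 m.+1)) (delta 3).

Lemma QP m u : reflect (~ dec3 (next (m :: u)) m.+1) (Q m u).
Proof.
apply: (iffP idP).
  by move=> hq /ol3 /negP; apply.
by move=> h; apply/negPn/negP => /ol3.
Qed.

Lemma sumn_delta m c : 0 < m -> sumn [seq (if j == m then c else 0) | j <- iota 1 m] = c.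
Proof.
case: m => [|m] // _.
rewrite (_ : iota 1 m.+1 = iota 1 m ++ [:: m.+1]); last by rewrite -[m.+1]addn1 iotaD addnC.
rewrite map_cat sumn_cat.
rewrite (_ : sumn [seq (if j == m.+1 then c else 0) | j <- [:: m.+1]] = c); last by rewrite /= eqxx addn0.
have H : all (pred1 0) [seq (if j == m.+1 then c else 0) | j <- iota 1 m].
  apply/allP => x /mapP [j hj ->]; rewrite ifN //=; apply/eqP; move: hj; rewrite mem_iota; lia.
by rewrite (all_pred1P _ _ H) sumn_nseq.
Qed.

Lemma countQ m : 0 < m -> count (Q m) (gen m) = 2 ^ (m - 1).
Proof.
elim/ltn_ind: m => m IH hm.
case: m IH hm => [|m] IH hm //.
case: m IH hm => [|m] IH _.
  have h1 : Q 1 [:: 0] by apply/QP => -[x [y [z H]]]; lia.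
  by rewrite genS /= h1.
rewrite genS count_cat count_map count_flatten -map_comp.
rewrite (_ : count (preim (fun a => a ++ [:: m.+1]) (Q m.+2)) (gen m.+1) = count (Q m.+1) (gen m.+1)); last first.
  apply: eq_in_count => a ha /=.
  have [hp _] := (mem_gen _ _).1 ha.
  apply/QP/QP => H1 H2; apply: H1; exact/((Q_E1 hp).1).
rewrite (_ : [seq (count (Q m.+2) \o (fun j => [seq iota j (m.+1 - j) ++ m.+1 :: b | b <- gen j])) j | j <- iota 1 m.+1] =
   [seq (if j == m.+1 then count (Q m.+1) (gen m.+1) else 0) | j <- iota 1 m.+1]); last first.
  apply/eq_in_map => j; rewrite mem_iota => hj /=.
  rewrite count_map.
  case: eqP => [->|ne].
    apply: eq_in_count => b hb /=.
    have [hp _] := (mem_gen _ _).1 hb.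
    have := (Q_E2 (m := m.+1) (j := m.+1) ltac:(lia) hp).1.
    move=> E; apply/QP/QP => H1 H2; apply: H1.
      by apply/E; right.
    by move: H2 => /E [h|//]; rewrite ltnn in h.
  rewrite -(count_pred0 (gen j)); apply: eq_in_count => b hb /=.
  have [hp _] := (mem_gen _ _).1 hb.
  have := (Q_E2 (m := m.+1) (j := j) ltac:(lia) hp).1.
  move=> E; apply/negbTE/QP => H; apply: H; apply/E; left; lia.
rewrite sumn_delta // IH //.
by rewrite (_ : m.+2 - 1 = (m.+1 - 1).+1) ?expnS ?mul2n -?addnn; lia.
Qed.

Section Bridge.
Variable N : nat.
Local Notation n := N.+1.

Lemma pfun_val (p : {perm 'I_n}) (i : 'I_n) : pfun p i = p i.
Proof. by rewrite /pfun valK. Qed.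

Lemma pfun_ord (p : {perm 'I_n}) x (hx : x < n) : pfun p x = p (Ordinal hx).
Proof. by rewrite -pfun_val. Qed.

Lemma traject_val (p : {perm 'I_n}) (i : 'I_n) k :
  traject (pfun p) (val i) k = map val (traject p i k).
Proof. by elim: k i => [|k IH] i //=; rewrite pfun_val IH. Qed.

Lemma iter_val (p : {perm 'I_n}) (i : 'I_n) k :
  iter k (pfun p) (val i) = val (iter k p i).
Proof. by elim: k => [|k IH] //=; rewrite IH pfun_val. Qed.

Lemma cyclic_all (p : {perm 'I_n}) : cyclic_perm p -> forall i j : 'I_n, j \in porbit p i.
Proof.
case/existsP=> x /eqP hx.
have ex : porbit p x = [set: 'I_n].
  by apply/eqP; rewrite eqEcard subsetT cardsT card_ord hx /= leqnn.
move=> i j.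
have : i \in porbit p x by rewrite ex inE.
rewrite -eq_porbit_mem => /eqP ->; by rewrite ex inE.
Qed.

Lemma cyclic_card (p : {perm 'I_n}) : cyclic_perm p -> forall i, #|porbit p i| = n.
Proof.
move=> hc i.
have -> : porbit p i = [set: 'I_n] by apply/setP => j; rewrite inE cyclic_all.
by rewrite cardsT card_ord.
Qed.

Lemma fcycle_traject (f : nat -> nat) x k : iter k.+1 f x = x -> fcycle f (traject f x k.+1).
Proof.
move=> h; rewrite trajectS /=.
have e : iter k f (f x) = x by rewrite -iterSr.
have -> : rcons (traject f (f x) k) x = traject f (f x) k.+1 by rewrite trajectSr e.
exact: fpath_traject.
Qed.

Lemma traject_rot (f : nat -> nat) x m k : iter m f x = x -> k <= m ->
  traject f (iter k f x) m = rot k (traject f x m).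
Proof.
move=> hx; case: m hx => [|m] hx.
  by move=> hk; rewrite (_ : k = 0) ?rot0 //; lia.
elim: k => [|k IH] hk; first by rewrite rot0.
rewrite rotS ?size_traject // -IH; last lia.
set y := iter k f x.
have hy : iter m.+1 f y = y by rewrite /y -iterD addnC iterD hx.
rewrite iterS -/y.
rewrite [traject f (f y) m.+1]trajectSr [traject f y m.+1]trajectS rot1_cons -iterSr hy.
by [].
Qed.

Lemma traject_next_uniq (y : nat) l : uniq (y :: l) ->
  traject (next (y :: l)) y (size l).+1 = y :: l.
Proof.
move=> hu.
have hit : forall i, i <= size l -> iter i (next (y :: l)) y = nth y (y :: l) i.
  elim=> [|i IH] hi //.
  rewrite iterS IH; last lia.
  rewrite next_nth mem_nth; last by rewrite /=; lia.
  change (nth y l (index (nth y (y :: l) i) (y :: l)) = nth y l i).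
  by rewrite index_uniq //=; lia.
apply: (@eq_from_nth _ y); first by rewrite size_traject.
move=> i; rewrite size_traject => hi; rewrite nth_traject // hit //; lia.
Qed.

Definition wordp (p : {perm 'I_n}) := traject (pfun p) N n.

Lemma wordp_props (p : {perm 'I_n}) : cyclic_perm p ->
  [/\ uniq (wordp p), perm_eq (wordp p) (iota 0 n),
      forall x, x < n -> next (wordp p) x = pfun p x &
      exists k, cycle_form p = rot k (wordp p)].
Proof.
move=> hc.
have ew : wordp p = map val (traject p ord_max n) by rewrite /wordp -traject_val.
have hu : uniq (wordp p).
  rewrite ew map_inj_uniq; last exact: val_inj.
  by have := uniq_traject_porbit p ord_max; rewrite cyclic_card.
have hit : forall y : 'I_n, iter n p y = y.
  by move=> y; have := iter_porbit p y; rewrite cyclic_card.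
have hmem : forall x, (x \in wordp p) = (x < n).
  move=> x; apply/idP/idP.
    rewrite ew => /mapP [i _ ->]; exact: ltn_ord.

  move=> hx; rewrite ew; apply/mapP; exists (Ordinal hx) => //.
  by have := porbit_traject p ord_max (Ordinal hx); rewrite (cyclic_card hc) (cyclic_all hc).
have hp : perm_eq (wordp p) (iota 0 n).
  by apply: uniq_perm => //; [exact: iota_uniq | move=> x; rewrite hmem mem_iota].
have hitn : iter n (pfun p) N = N.
  by have := iter_val p ord_max n; rewrite hit => ->.
split => //.
  move=> x hx; apply: (nextE (fcycle_traject hitn)).
  by rewrite -/(wordp p) hmem.
have : 0 \in wordp p by rewrite hmem.
case/trajectP => k hk e.
exists k; rewrite /cycle_form e traject_rot //; lia.
Qed.

Lemma wordp_cons (p : {perm 'I_n}) : wordp p = N :: behead (wordp p).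
Proof. by []. Qed.

Lemma oneline_next (p : {perm 'I_n}) (g : nat -> nat) :
  (forall x, x < n -> g x = pfun p x) -> oneline p = map g (iota 0 n).
Proof.
move=> hg; rewrite /oneline -val_enum_ord -map_comp.
by apply/eq_in_map => i _ /=; rewrite hg ?pfun_val.
Qed.

Lemma valid_word (p : {perm 'I_n}) : cyclic_perm p ->
  [forall i : 'I_n, avoids (rot i (cycle_form p)) p1324] <-> good (behead (wordp p)).
Proof.
move=> hc; have [hu hp hn [k ek]] := wordp_props hc.
rewrite cyc_forall; last by rewrite /cycle_form size_traject.
rewrite ek cyc_rot wordp_cons cyc_maxfirst; last first.
  move=> x hx; have : x \in wordp p by rewrite wordp_cons inE hx orbT.
  rewrite (perm_mem hp) mem_iota => hx'.
  have : N != x.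
    apply/eqP => e; subst x; move: hu; rewrite wordp_cons /= hx //.
  lia.
rewrite /good; split.
  by move=> H; split => h; apply: H; [left|right].
by case=> h1 h2 [].
Qed.

Section FromWord.
Variable u : seq nat.
Hypothesis hpu : perm_eq u (iota 0 N).
Let w := N :: u.
Let hpw : perm_eq w (iota 0 n) := word_perm hpu.
Lemma huw : uniq w. Proof. by rewrite (perm_uniq hpw) iota_uniq. Qed.

Lemma next_lt (i : 'I_n) : next w i < n.
Proof.
have : next w i \in w by rewrite mem_next (perm_mem hpw) mem_iota; have := ltn_ord i; lia.
by rewrite (perm_mem hpw) mem_iota.
Qed.

Definition Fw (i : 'I_n) : 'I_n := Ordinal (next_lt i).

Lemma Fw_inj : injective Fw.
Proof.
move=> i j /(congr1 val) /= e; apply: val_inj.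
by have := congr1 (prev w) e; rewrite !(prev_next huw).
Qed.

Definition pw : {perm 'I_n} := perm Fw_inj.

Lemma pfun_pw x : x < n -> pfun pw x = next w x.
Proof. by move=> hx; rewrite (pfun_ord pw hx) permE. Qed.

Lemma traject_eq (f g : nat -> nat) x k : x < n -> (forall y, y < n -> f y = g y) ->
  (forall y, y < n -> f y < n) -> traject f x k = traject g x k.
Proof.
move=> hx hfg hf; elim: k x hx => [|k IH] x hx //=.
by rewrite IH ?hf // hfg.
Qed.

Lemma wordp_pw : wordp pw = w.
Proof.
have e := traject_next_uniq huw.
rewrite /wordp (traject_eq (g := next w)) //.
- by rewrite (perm_size hpu) size_iota in e; rewrite /w e.
- exact: pfun_pw.
- by move=> y hy; rewrite pfun_pw // (next_lt (Ordinal hy)).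
Qed.

Lemma cyclic_pw : cyclic_perm pw.
Proof.
apply/existsP; exists ord_max; apply/eqP.
have -> : porbit pw ord_max = [set: 'I_n].
  apply/setP => i; rewrite inE.
  have : val i \in wordp pw by rewrite wordp_pw (perm_mem hpw) mem_iota /= ltn_ord.
  case/trajectP => k _ e.
  have -> : i = (pw ^+ k)%g ord_max.
    by apply: val_inj; rewrite permX -iter_val.
  exact: mem_porbit.
by rewrite cardsT card_ord.
Qed.
End FromWord.

Lemma a_circ_count k : a_circ n k =
  count (fun u => avoids (map (next (N :: u)) (iota 0 n)) (delta k)) (gen N).
Proof.
set P := fun u => _.
rewrite /a_circ cardE.
set E := enum _.
have hE : forall p, p \in E -> [/\ cyclic_perm p, avoids (oneline p) (delta k) &
    [forall i : 'I_n, avoids (rot i (cycle_form p)) p1324]].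
  by move=> p; rewrite /E mem_enum inE => /and3P.
have hE2 : forall p, cyclic_perm p -> avoids (oneline p) (delta k) ->
    [forall i : 'I_n, avoids (rot i (cycle_form p)) p1324] -> p \in E.
  by move=> p h1 h2 h3; rewrite /E mem_enum inE h1 h2 h3.
have uE : uniq E by rewrite /E enum_uniq.
have hmap : perm_eq (map (fun p => behead (wordp p)) E) (filter P (gen N)).
  apply: uniq_perm.
  - rewrite map_inj_in_uniq //.
    move=> p q /hE [hcp _ _] /hE [hcq _ _] e.
    have ew : wordp p = wordp q by rewrite wordp_cons e -wordp_cons.
    have [_ _ hnp _] := wordp_props hcp; have [_ _ hnq _] := wordp_props hcq.
    apply/permP => i; apply: ord_inj; rewrite -!pfun_val -hnp // -hnq // ew //.
  - by rewrite filter_uniq // uniq_gen.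
  move=> u; apply/mapP/idP.
    case=> p /hE [hc ho hv] ->.
    have [hu hp hn _] := wordp_props hc.
    rewrite mem_filter; apply/andP; split.
      by rewrite /P -wordp_cons -(oneline_next hn).
    apply/mem_gen; split; last by apply/valid_word.
    rewrite -(perm_cons N) -wordp_cons (perm_trans hp) //.
    by rewrite iotaSr -cat1s perm_catC.
  rewrite mem_filter => /andP [hP hg].
  have [hpu hgu] := (mem_gen _ _).1 hg.
  exists (pw hpu); last by rewrite wordp_pw.
  have hc := cyclic_pw hpu.
  apply: hE2 => //.
    rewrite (oneline_next (g := next (N :: u))) //.
    by move=> x hx; rewrite pfun_pw.
  by apply/valid_word => //; rewrite wordp_pw.
by rewrite -size_filter -(perm_size hmap) size_map.
Qed.
End Bridge.
Unset Implicit Arguments.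

Theorem theorem3p1 (n : nat) : 3 <= n ->
  a_circ n 3 = 2 ^ (n - 2) /\ (forall k : nat, 4 <= k -> a_circ n k = fib (2 * n - 3)).
Proof.
case: n => [|N] // hn.
split.
  rewrite a_circ_count -/(Q N) countQ; last lia.
  by congr (2 ^ _); lia.
move=> k hk; rewrite a_circ_count.
rewrite (eq_in_count (a2 := predT)); last first.
  by move=> u hu; apply: ol4 => //; apply: no_dec4.
rewrite count_predT size_gen; last lia.
by congr fib; lia.
Qed.
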